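(* Let $R$ be a valuation domain with quotient field $Q\neq R$, and let $A\subseteq J$ be $R$-submodules of $Q$. Suppose $J=\bigcup_{\nu<\omega_1} r_\nu^{-1}R=\bigcup_{\nu<\omega_1} s_\nu^{-1}R$, where $r_\nu,s_\nu\in R\setminus\{0\}$, $r_\mu\mid r_\nu$ and $s_\mu\mid s_\nu$ whenever $\mu<\nu<\omega_1$. Then the set $\{\delta<\omega_1 : \bigcap_{\sigma<\delta} r_\sigma A=\bigcap_{\sigma<\delta} s_\sigma A\}$ is a closed unbounded subset of $\omega_1$.
   Context: A subset $C\subseteq\omega_1$ is closed unbounded (a cub) if $\sup C=\omega_1$ and for every $Y\subseteq C$ with $\sup Y<\omega_1$ we have $\sup Y\in C$. *)

(* Defs.v *)
From HB Require Import structures.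
From mathcomp Require Import all_boot all_order all_algebra.
Set Implicit Arguments. Unset Strict Implicit. Unset Printing Implicit Defensive.
Import GRing.Theory.
Local Open Scope ring_scope.

Definition countable_set (W : Type) (A : W -> Prop) : Prop :=
  exists f : W -> nat, forall x y, A x -> A y -> f x = f y -> x = y.

(* (W, lt) is (order-isomorphic to) omega_1: a strict well-order that is
   total, uncountable, and all of whose proper initial segments are countable. *)
Definition is_omega1 (W : Type) (lt : W -> W -> Prop) : Prop :=
  (forall x, ~ lt x x) /\
  (forall x y z, lt x y -> lt y z -> lt x z) /\
  (forall x y, lt x y \/ x = y \/ lt y x) /\
  well_founded lt /\
  (forall a, countable_set (fun b => lt b a)) /\
  ~ countable_set (fun _ : W => True).

Definition le_of (W : Type) (lt : W -> W -> Prop) (x y : W) : Prop :=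
  lt x y \/ x = y.

Definition is_sup (W : Type) (lt : W -> W -> Prop) (Y : W -> Prop) (s : W) :=
  (forall y, Y y -> le_of lt y s) /\
  (forall t, (forall y, Y y -> le_of lt y t) -> le_of lt s t).

(* closed unbounded subset of omega_1 (as in the paper):
   sup C = omega_1, and every Y ⊆ C with sup Y < omega_1 has sup Y ∈ C. *)
Definition cub (W : Type) (lt : W -> W -> Prop) (C : W -> Prop) : Prop :=
  (forall a, exists b, C b /\ lt a b) /\
  (forall Y : W -> Prop, (forall y, Y y -> C y) ->
     forall s, is_sup lt Y s -> C s).

Definition is_subring (Q : fieldType) (R : Q -> Prop) : Prop :=
  R 0 /\ R 1 /\ (forall x y, R x -> R y -> R (x - y)) /\
  (forall x y, R x -> R y -> R (x * y)).

Definition is_quotient_field (Q : fieldType) (R : Q -> Prop) : Prop :=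
  forall q : Q, exists a b, R a /\ R b /\ b != 0 /\ q = a / b.

Definition is_valuation_ring (Q : fieldType) (R : Q -> Prop) : Prop :=
  forall x : Q, x != 0 -> R x \/ R x^-1.

Definition is_Rsubmodule (Q : fieldType) (R : Q -> Prop) (M : Q -> Prop) :=
  M 0 /\ (forall x y, M x -> M y -> M (x + y)) /\
  (forall r x, R r -> M x -> M (r * x)).

Definition rdvd (Q : fieldType) (R : Q -> Prop) (a b : Q) : Prop :=
  exists t, R t /\ b = t * a.

Definition smul (Q : fieldType) (c : Q) (M : Q -> Prop) : Q -> Prop :=
  fun x => exists m, M m /\ x = c * m.

(* ⋂_{σ<δ} r_σ A  (equals Q when δ = 0) *)
Definition bigcap_lt (W : Type) (lt : W -> W -> Prop) (Q : fieldType)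
  (r : W -> Q) (A : Q -> Prop) (d : W) : Q -> Prop :=
  fun x => forall s, lt s d -> smul (r s) A x.

(* Main.v *)
Require Import Defs.
From HB Require Import structures.
From mathcomp Require Import all_boot all_order all_algebra.
From Stdlib Require Import Classical ClassicalEpsilon.
Import GRing.Theory.
Local Open Scope ring_scope.

Lemma wf_min {W : Type} {lt : W -> W -> Prop} (Hwf : well_founded lt)
  (P : W -> Prop) x : P x -> exists m, P m /\ forall y, P y -> ~ lt y m.
Proof.
intro Hx. apply NNPP; intro Hn.
assert (forall z, ~ P z).
{ intro z. induction z as [z IH] using (well_founded_ind Hwf).
  intro Pz. apply Hn. exists z. split; [exact Pz|]. intros y Py Hy. exact (IH y Hy Py). }
exact (H x Hx).
Qed.

Lemma bound_seq {W : Type} {lt : W -> W -> Prop} (HW : is_omega1 lt)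
  (e : nat -> W) : exists b, forall n, lt (e n) b.
Proof.
destruct HW as [Hirr [Htr [Htot [Hwf [Hcnt Hunc]]]]].
apply NNPP; intro Hno.
assert (H1 : forall b, exists n, le_of lt b (e n)).
{ intro b. apply NNPP; intro H. apply Hno. exists b. intro n.
  destruct (Htot (e n) b) as [h|[h|h]]; auto; exfalso; apply H; exists n.
  - right; auto.
  - left; auto. }
set N := fun b => proj1_sig (constructive_indefinite_description _ (H1 b)).
have HN : forall b, le_of lt b (e (N b)).
{ intro b. exact (proj2_sig (constructive_indefinite_description _ (H1 b))). }
set F := fun a => proj1_sig (constructive_indefinite_description _ (Hcnt a)).
have HF : forall a x y, lt x a -> lt y a -> F a x = F a y -> x = y.
{ intro a. exact (proj2_sig (constructive_indefinite_description _ (Hcnt a))). }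
apply Hunc.
exists (fun b => pickle (N b, if excluded_middle_informative (b = e (N b)) then 0%N
                        else S (F (e (N b)) b))).
intros x y _ _ Heq.
have := pcan_inj (@pickleK _) Heq. case=> HNe.
destruct (excluded_middle_informative (x = e (N x))) as [ex|ex];
destruct (excluded_middle_informative (y = e (N y))) as [ey|ey]; try discriminate.
- intros _; transitivity (e (N x)); [exact ex|]; rewrite HNe; symmetry; exact ey.
- case=> Hc. rewrite HNe in Hc. apply (HF (e (N y))); auto.
  + destruct (HN x) as [h|h]; [rewrite -HNe; exact h| contradiction].
  + destruct (HN y) as [h|h]; [exact h| contradiction].
Qed.

Lemma enum_below {W : Type} {lt : W -> W -> Prop} (HW : is_omega1 lt) (b : W) :
  exists E : nat -> W, forall v, lt v b -> exists n, E n = v.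
Proof.
destruct HW as [Hirr [Htr [Htot [Hwf [Hcnt Hunc]]]]].
destruct (Hcnt b) as [f Hf].
exists (fun n => match excluded_middle_informative (exists x, lt x b /\ f x = n) with
          | left p => proj1_sig (constructive_indefinite_description _ p)
          | right _ => b end).
intros v Hv. exists (f v).
destruct (excluded_middle_informative (exists x, lt x b /\ f x = f v)) as [p|p].
- destruct (proj2_sig (constructive_indefinite_description _ p)) as [h1 h2].
  apply Hf; auto.
- exfalso; apply p; exists v; auto.
Qed.

Lemma step {W : Type} {lt : W -> W -> Prop} (HW : is_omega1 lt) (g h : W -> W) (b : W) :
  exists c, lt b c /\ forall v, le_of lt v b -> lt (g v) c /\ lt (h v) c.
Proof.
destruct (enum_below HW b) as [E HE].
set E' := fun m => match m with 0%N => b | S m' => E m' end.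
have HE' : forall v, le_of lt v b -> exists m, E' m = v.
{ intros v [hv|hv]. - destruct (HE v hv) as [n hn]; exists (S n); exact hn.
  - exists 0%N; symmetry; exact hv. }
destruct (bound_seq HW (fun k => match k with 0%N => b | S k' =>
   if odd k' then g (E' (k'./2)) else h (E' (k'./2)) end)) as [c Hc].
exists c; split; [exact (Hc 0%N)|].
intros v hv; destruct (HE' v hv) as [m <-]; split.
- have := Hc (S (m.*2).+1). by rewrite /= odd_double /= uphalf_double.
- have := Hc (S (m.*2)). by rewrite /= odd_double doubleK.
Qed.

Lemma closure_pt {W : Type} {lt : W -> W -> Prop} (HW : is_omega1 lt) (g h : W -> W) (a : W) :
  exists d, lt a d /\ forall v, lt v d -> lt (g v) d /\ lt (h v) d.
Proof.
have HS := step HW g h.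
set F := fun b => proj1_sig (constructive_indefinite_description _ (HS b)).
have HF : forall b, lt b (F b) /\ forall v, le_of lt v b -> lt (g v) (F b) /\ lt (h v) (F b).
{ intro b. exact (proj2_sig (constructive_indefinite_description _ (HS b))). }
destruct HW as [Hirr [Htr [Htot [Hwf [Hcnt Hunc]]]]].
destruct (bound_seq (conj Hirr (conj Htr (conj Htot (conj Hwf (conj Hcnt Hunc)))))
   (fun n => iter n F a)) as [b0 Hb0].
destruct (wf_min Hwf (fun d => forall n, lt (iter n F a) d) b0 Hb0) as [d [Hd Hmin]].
exists d; split; [exact (Hd 0%N)|].
intros v Hv.
have [n Hn] : exists n, le_of lt v (iter n F a).
{ apply NNPP; intro Hno. apply (Hmin v); [|exact Hv].
  intro n. destruct (Htot (iter n F a) v) as [h1|[h1|h1]]; auto;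
  exfalso; apply Hno; exists n; [right; auto|left; auto]. }
destruct (proj2 (HF (iter n F a)) v Hn) as [h1 h2].
split; apply (Htr _ (iter n.+1 F a)); auto.
Qed.



Lemma div_ex {W : Type} (Q : fieldType) (R : Q -> Prop) (HR1 : R 1)
  (r s : W -> Q) (Hr0 : forall n, r n != 0) (Hs0 : forall n, s n != 0)
  (J : Q -> Prop)
  (HJr : forall x, J x <-> exists n, smul (r n)^-1 R x)
  (HJs : forall x, J x <-> exists n, smul (s n)^-1 R x) (v : W) :
  exists u, exists t, R t /\ s u = t * r v.
Proof.
have : J (r v)^-1 by apply HJr; exists v, 1; split; [exact HR1| by rewrite mulr1].
move/HJs=> [u [m [Hm E]]]. exists u, m; split; first exact Hm.
have Em : m = s u * (r v)^-1 by rewrite E mulrA mulfV ?Hs0 // mul1r.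
by rewrite Em mulfVK ?Hr0.
Qed.

Theorem lemma2 (W : Type) (lt : W -> W -> Prop) (HW : is_omega1 lt)
  (Q : fieldType) (R : Q -> Prop)
  (HRsub : is_subring R) (HRfrac : is_quotient_field R)
  (HRval : is_valuation_ring R) (HQR : exists q : Q, ~ R q)
  (A J : Q -> Prop) (HA : is_Rsubmodule R A) (HJ : is_Rsubmodule R J)
  (HAJ : forall x, A x -> J x)
  (r s : W -> Q)
  (Hr0 : forall n, R (r n) /\ r n != 0) (Hs0 : forall n, R (s n) /\ s n != 0)
  (Hrdvd : forall m n, lt m n -> rdvd R (r m) (r n))
  (Hsdvd : forall m n, lt m n -> rdvd R (s m) (s n))
  (HJr : forall x, J x <-> exists n, smul (r n)^-1 R x)
  (HJs : forall x, J x <-> exists n, smul (s n)^-1 R x) :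
  cub lt (fun d => forall x, bigcap_lt lt r A d x <-> bigcap_lt lt s A d x).
Proof.
destruct HRsub as [HR0 [HR1 _]].
destruct HA as [_ [_ HAm]].
have Dg := @div_ex W Q R HR1 r s (fun n => proj2 (Hr0 n)) (fun n => proj2 (Hs0 n)) J HJr HJs.
have Dh := @div_ex W Q R HR1 s r (fun n => proj2 (Hs0 n)) (fun n => proj2 (Hr0 n)) J HJs HJr.
set g := fun v => proj1_sig (constructive_indefinite_description _ (Dg v)).
set h := fun v => proj1_sig (constructive_indefinite_description _ (Dh v)).
have Hg : forall v, exists t, R t /\ s (g v) = t * r v.
{ intro v. exact (proj2_sig (constructive_indefinite_description _ (Dg v))). }
have Hh : forall v, exists t, R t /\ r (h v) = t * s v.
{ intro v. exact (proj2_sig (constructive_indefinite_description _ (Dh v))). }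
have HW' := HW.
destruct HW' as [Hirr [Htr [Htot [Hwf [Hcnt Hunc]]]]].
split.
- intro a. destruct (closure_pt HW g h a) as [d [Had Hd]].
  exists d; split; [|exact Had].
  intro x; split.
  + intros Hx v Hv. destruct (Hx (h v) (proj2 (Hd v Hv))) as [m [Am Ex]].
    destruct (Hh v) as [t [Rt Et]].
    exists (t * m); split; [by apply HAm|]. by rewrite Ex Et -mulrA mulrCA.
  + intros Hx v Hv. destruct (Hx (g v) (proj1 (Hd v Hv))) as [m [Am Ex]].
    destruct (Hg v) as [t [Rt Et]].
    exists (t * m); split; [by apply HAm|]. by rewrite Ex Et -mulrA mulrCA.
- intros Y HY s0 [Hub Hlub].
  destruct (classic (Y s0)) as [Ys|Ys]; [exact (HY s0 Ys)|].
  have Hc : forall v, lt v s0 -> exists y, Y y /\ lt v y /\ lt y s0.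
  { intros v Hv. apply NNPP; intro Hno.
    have : le_of lt s0 v.
    { apply Hlub. intros y Yy.
      destruct (Htot y v) as [e1|[e1|e1]]; [left; exact e1|right; exact e1|].
      exfalso; apply Hno; exists y; split; [exact Yy|split; [exact e1|]].
      destruct (Hub y Yy) as [e2|e2]; [exact e2|subst; contradiction]. }
    intros [e1|e1]; [exact (Hirr _ (Htr _ _ _ e1 Hv))|subst; exact (Hirr _ Hv)]. }
  intro x; split.
  + intros Hx v Hv. destruct (Hc v Hv) as [y [Yy [e1 e2]]].
    apply (proj1 (HY y Yy x)); [|exact e1].
    intros w Hw. apply Hx. exact (Htr _ _ _ Hw e2).
  + intros Hx v Hv. destruct (Hc v Hv) as [y [Yy [e1 e2]]].
    apply (proj2 (HY y Yy x)); [|exact e1].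
    intros w Hw. apply Hx. exact (Htr _ _ _ Hw e2).
Qed.
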